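(* Let $n\ge 0$ be an even integer and $p\in\Gamma_n$. Then $\mathrm{Sub}(p)=\{\sigma_{n-1}(p),\pi_{n-1}(p)\}$; that is, the only occurrences of $(n-1)$-ambiguities in $p$ are the suffix $\sigma_{n-1}(p)$ and the prefix $\pi_{n-1}(p)$ (and these two are distinct).
   Context: Let $\Bbbk$ be a field, $Q=(Q_0,Q_1,s,t)$ a finite quiver, and $A=\Bbbk Q/I$ a finite-dimensional monomial algebra, i.e. $I$ is an ideal generated by paths of length at least $2$. Paths are written from right to left: a path is $p=\alpha_n\cdots\alpha_1$ with arrows $\alpha_i$ and $t(\alpha_i)=s(\alpha_{i+1})$; vertices are the paths of length $0$ (trivial paths, also denoted $1$); $qp$ denotes concatenation when $t(p)=s(q)$. Let $\mathcal B$ be the set of paths not lying in $I$. If $p=bqa$ for paths $a,b,q$, then $q$ is a divisor of $p$; we write $q\le p$ to mean that $q$ is a divisor of $p$ at a fixed position (an occurrence), and then $\mathrm{pre}_p(q):=a$, $\mathrm{suf}_p(q):=b$. If $b$ is trivial, $q$ is a suffix; if $a$ is trivial, $q$ is a prefix; proper means $q\neq p$, written $q\lneq p$. For $n\ge -1$, a left $n$-ambiguity is a path $p$ with a decomposition $p=u_{-1}u_0u_1\cdots u_n$ such that $u_{-1}\in Q_0$, $u_0\in Q_1$, $u_i\in\mathcal B$ for all $i$, and for every $0\le i\le n-1$, $u_iu_{i+1}\in I$ while no proper suffix of $u_iu_{i+1}$ lies in $I$ (one writes $p=u_0\cdots u_n$). A right $n$-ambiguity is a path with a decomposition $p=v_n\cdots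 v_0v_{-1}$ with $v_{-1}\in Q_0$, $v_0\in Q_1$, $v_i\in\mathcal B$, and for $0\le i\le n-1$, $v_{i+1}v_i\in I$ while no proper prefix of $v_{i+1}v_i$ lies in $I$. A path is a left $n$-ambiguity iff it is a right $n$-ambiguity; such paths are called $n$-ambiguities, and $\Gamma_n$ denotes their set. Both decompositions of an $n$-ambiguity are unique. For $p\in\Gamma_n$ with left decomposition $u_0\cdots u_n$ and right decomposition $v_n\cdots v_0$, and $-1\le m\le n$, set $\sigma_m(p):=u_0\cdots u_m$ (a suffix of $p$ which is an $m$-ambiguity) and $\pi_m(p):=v_m\cdots v_0$ (a prefix of $p$ which is an $m$-ambiguity). For $p\in\Gamma_n$, $\mathrm{Sub}(p):=\{q\in\Gamma_{n-1}: q\le p\}$ is the set of occurrences of $(n-1)$-ambiguities in $p$. *)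

(* Defs.v *)
From HB Require Import structures.
From mathcomp Require Import all_boot all_order all_algebra.
From Stdlib Require Import ClassicalEpsilon.

Set Implicit Arguments.
Unset Strict Implicit.
Unset Printing Implicit Defensive.

Import GRing.Theory Num.Theory.

(* Conventions:
   - A path of the quiver (V, E, s, t) is a pair (v, w) : V * seq E, where v is
     its source vertex and w is the list of its arrows IN TRAVERSAL ORDER
     (i.e. the path alpha_n ... alpha_1 of the paper is (s alpha_1, [alpha_1; ...; alpha_n])).
     Trivial paths are (v, [::]).
   - The concatenation qp of the paper (first p, then q) is [pcat p q].
   - A "suffix" in the paper (left factor, traversed last) is the END of the
     arrow list; a "prefix" is its BEGINNING.
   - The monomial ideal I is given by a list [rels] of generating paths
     (arrow lists); a path lies in I iff some generator is a contiguous
     subpath of it.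
   - Occurrences q <= p are encoded by positions (i, l) : nat * nat with
     i + l <= length p: the subpath starting after the first i arrows of p and
     consisting of the next l arrows (l = 0 gives vertex occurrences).
   - Ambiguity degrees n >= -1 are integers. *)

Section Quiver.
Variables (V E : finType) (s t : E -> V).

Definition qpath := (V * seq E)%type.
Definition src (p : qpath) : V := p.1.
Definition arrs (p : qpath) : seq E := p.2.
Definition plen (p : qpath) : nat := size p.2.
Definition tgt (p : qpath) : V := last p.1 (map t p.2).

Definition validw (w : seq E) : bool := sorted (fun a b => t a == s b) w.
Definition valid (p : qpath) : bool :=
  validw (arrs p) && (if arrs p is a :: _ then s a == src p else true).

(* the path "q p" of the paper: first p, then q *)
Definition pcat (p q : qpath) : qpath := (src p, arrs p ++ arrs q).
Definition composable (p q : qpath) : bool := tgt p == src q.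

Definition vtx_at (p : qpath) (i : nat) : V := last (src p) (map t (take i (arrs p))).
Definition subp (p : qpath) (i l : nat) : qpath := (vtx_at p i, take l (drop i (arrs p))).

Variable rels : seq (seq E).

Definition inI (p : qpath) : bool := has (fun r => infix r (arrs p)) rels.
Definition inB (p : qpath) : bool := valid p && ~~ inI p.

Definition no_proper_suffix_in_I (p : qpath) : Prop :=
  forall j, 0 < j <= plen p -> ~~ inI (subp p j (plen p - j)).
Definition no_proper_prefix_in_I (p : qpath) : Prop :=
  forall l, l < plen p -> ~~ inI (subp p 0 l).

(* left decomposition p = u_{-1} u_0 u_1 ... u_n, us = [:: u_0; ...; u_n];
   u_{-1} is the (trivial) target vertex, implicit. *)
Definition left_decomp (n : int) (p : qpath) (us : seq qpath) : Prop :=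
  Posz (size us) = (n + 1)%R /\ valid p /\
  match us with
  | [::] => arrs p = [::]
  | u0 :: _ =>
      plen u0 = 1%N /\ (forall u, u \in us -> inB u) /\
      (forall i, i.+1 < size us ->
         composable (nth p us i.+1) (nth p us i) /\
         inI (pcat (nth p us i.+1) (nth p us i)) /\
         no_proper_suffix_in_I (pcat (nth p us i.+1) (nth p us i))) /\
      p = (src (last u0 us), flatten (rev (map arrs us)))
  end.

(* right decomposition p = v_n ... v_1 v_0 v_{-1}, vs = [:: v_0; ...; v_n];
   v_{-1} is the (trivial) source vertex, implicit. *)
Definition right_decomp (n : int) (p : qpath) (vs : seq qpath) : Prop :=
  Posz (size vs) = (n + 1)%R /\ valid p /\
  match vs with
  | [::] => arrs p = [::]
  | v0 :: _ =>
      plen v0 = 1%N /\ (forall v, v \in vs -> inB v) /\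
      (forall i, i.+1 < size vs ->
         composable (nth p vs i) (nth p vs i.+1) /\
         inI (pcat (nth p vs i) (nth p vs i.+1)) /\
         no_proper_prefix_in_I (pcat (nth p vs i) (nth p vs i.+1))) /\
      p = (src v0, flatten (map arrs vs))
  end.

(* Gamma_n : the n-ambiguities (left n-ambiguities; equivalently right ones) *)
Definition Gamma (n : int) (p : qpath) : Prop := exists us, left_decomp n p us.

Definition left_dec (n : int) (p : qpath) : seq qpath :=
  epsilon (inhabits [::]) (left_decomp n p).
Definition right_dec (n : int) (p : qpath) : seq qpath :=
  epsilon (inhabits [::]) (right_decomp n p).

(* sigma_m(p) = u_0 ... u_m : suffix of p; its occurrence (position, length) *)
Definition sigma_occ (m n : int) (p : qpath) : nat * nat :=
  let L := sumn (map plen (take `|(m + 1)%R|%N (left_dec n p))) in (plen p - L, L).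
(* pi_m(p) = v_m ... v_0 : prefix of p; its occurrence (position, length) *)
Definition pi_occ (m n : int) (p : qpath) : nat * nat :=
  (0, sumn (map plen (take `|(m + 1)%R|%N (right_dec n p)))).

Definition Sub_occ (n : int) (p : qpath) (o : nat * nat) : Prop :=
  o.1 + o.2 <= plen p /\ Gamma (n - 1)%R (subp p o.1 o.2).

End Quiver.

(* Main.v *)
Require Import Defs.
From HB Require Import structures.
From mathcomp Require Import all_boot all_order all_algebra.
From mathcomp Require Import zify.
From Stdlib Require Import ClassicalEpsilon.
Import GRing.Theory Num.Theory.

Module Aux.
Set Implicit Arguments.
Unset Strict Implicit.
Unset Printing Implicit Defensive.

Section Pos.
Variable Jr : nat -> nat -> bool.
Hypothesis Jmono : forall x y x' y', x <= x' -> y' <= y -> Jr x' y' -> Jr x y.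
Hypothesis Jshort : forall x, ~~ Jr x x.+1.

Lemma J_lt x y : Jr x y -> x.+1 < y.
Proof.
move=> H; rewrite ltnNge; apply/negP=> Hy.
by have := Jshort x; rewrite (Jmono (leqnn x) Hy H).
Qed.

Record LeftPos (a e N : nat) (D : nat -> nat) : Prop := LP {
  lp0 : D 0 = a; lpN : D N = e; lpinc : forall k, k < N -> D k < D k.+1;
  lplast : 0 < N -> (D N.-1).+1 = e;
  lpB : forall k, k < N -> ~~ Jr (D k) (D k.+1);
  lpI : forall k, k.+2 <= N -> Jr (D k) (D k.+2);
  lpM : forall k, k.+2 <= N -> ~~ Jr (D k).+1 (D k.+2) }.

Record RightPos (a e N : nat) (D : nat -> nat) : Prop := RP {
  rp0 : D 0 = a; rpN : D N = e; rpinc : forall k, k < N -> D k < D k.+1;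
  rpfirst : 0 < N -> D 1 = a.+1;
  rpB : forall k, k < N -> ~~ Jr (D k) (D k.+1);
  rpI : forall k, k.+2 <= N -> Jr (D k) (D k.+2);
  rpM : forall k, k.+2 <= N -> ~~ Jr (D k) (D k.+2).-1 }.

Lemma incr_le N (D : nat -> nat) : (forall k, k < N -> D k < D k.+1) ->
  forall i j, i <= j -> j <= N -> D i <= D j.
Proof.
move=> H i j Hij; elim: j Hij => [|j IH]; first by rewrite leqn0 => /eqP->.
rewrite leq_eqVlt => /orP[/eqP->//|Hij] HjN.
apply: (leq_trans (IH Hij (ltnW HjN))); exact: ltnW (H _ HjN).
Qed.

Definition Gm (e y : nat) := find (Jr y) (iota 0 e.+1).

Lemma Gm_le e y x : Jr y x -> x <= e -> Gm e y <= x.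
Proof.
move=> Hj Hx; rewrite leqNgt; apply/negP=> Hlt.
have := before_find 0 Hlt; rewrite nth_iota ?add0n ?Hj //.
Qed.

Lemma Gm_J e y x : Jr y x -> x <= e -> Jr y (Gm e y).
Proof.
move=> Hj Hx.
have Hh : has (Jr y) (iota 0 e.+1).
  by apply/hasP; exists x => //; rewrite mem_iota.
have := nth_find 0 Hh; rewrite nth_iota ?add0n //.
by move: Hh; rewrite has_find size_iota.
Qed.

Lemma Gm_min e y z : z < Gm e y -> ~~ Jr y z.
Proof.
move=> Hz; have Hs : Gm e y <= e.+1 by have := find_size (Jr y) (iota 0 e.+1); rewrite size_iota.
by have := before_find 0 Hz; rewrite nth_iota ?add0n ?(leq_trans Hz) // => ->.
Qed.

Lemma Gm_gt e y x z : Jr y z -> z <= e -> ~~ Jr y x -> x < Gm e y.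
Proof.
move=> Hz Hze Hx; rewrite ltnNge; apply/negP=> Hle.
by move: Hx; rewrite (Jmono (leqnn y) Hle (Gm_J Hz Hze)).
Qed.

Fixpoint Ef (e a k : nat) : nat :=
  match k with 0 => a | 1 => a.+1 | k'.+2 => Gm e (Ef e a k') end.

Lemma LtoR a e N D : LeftPos a e N D -> exists E, RightPos a e N E.
Proof.
case=> H0 HN Hinc Hlast HB HI HM.
have Hle := incr_le Hinc.
have HDe : forall k, k <= N -> D k <= e by move=> k Hk; rewrite -HN; apply: Hle.
pose P j := [/\ Ef e a j <= D j, (j < N -> D j < Ef e a j.+1) &
                (0 < j -> ~~ Jr (Ef e a j.-1) (D j))].
have key : forall j, (j <= N -> P j) /\ (j.+1 <= N -> P j.+1).
  elim=> [|j [IH1 IH2]].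
    split=> HN1.
      by split=> //= [|//]; [rewrite H0 | rewrite H0].
    split=> //=.
    - by rewrite -H0; apply: Hinc.
    - move=> H1; apply: (@Gm_gt e a (D 1) (D 2)); rewrite -?H0.
      + exact: HI.
      + exact: HDe.
      + exact: HB.
    - by move=> _; rewrite -H0; apply: HB.
  split=> // Hj2.
  have [Pa Pb Pc] := IH1 (ltnW (ltnW Hj2)).
  have [Qa Qb Qc] := IH2 (ltnW Hj2).
  have HJ2 : Jr (Ef e a j) (D j.+2) by apply: (Jmono Pa (leqnn _)); apply: HI.
  have HNJ : ~~ Jr (Ef e a j.+1) (D j.+2).
    apply/negP=> Hc; move/negP: (HM _ Hj2); apply.
    exact: (Jmono (Pb (ltnW Hj2)) (leqnn _) Hc).
  split=> //.
  - exact: Gm_le HJ2 (HDe _ Hj2).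
  - move=> Hj3; apply: (@Gm_gt e _ _ (D j.+3)).
    + by apply: (Jmono Qa (leqnn _)); apply: HI.
    + exact: HDe.
    + exact: HNJ.
have PN := fun j Hj => (key j).1 Hj.
have EN : Ef e a N = e.
have [N0|Npos] := posnP N.
  by rewrite N0 -HN N0 H0.
have [Pa _ _] := PN N (leqnn _).
have [_ Pb _] := PN N.-1 (leq_pred _).
have Hpp : N.-1 < N by rewrite ltn_predL.
have := Pb Hpp; rewrite prednK // => Pb'.
have Hl := Hlast Npos; rewrite Hl in Pb'.
by apply/eqP; rewrite eqn_leq -{2}HN Pa /= Pb'.
exists (Ef e a); split=> //.
- move=> k Hk; have [Pa Pb _] := PN k (ltnW Hk).
  exact: leq_ltn_trans Pa (Pb Hk).
- move=> k Hk; case: (ltnP k.+1 N) => Hk2.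
    have [Pa Pb _] := PN k.+1 (ltnW Hk2).
    by apply: Gm_min; exact: leq_ltn_trans Pa (Pb Hk2).
  have HkN : k.+1 = N by apply/eqP; rewrite eqn_leq Hk Hk2.
  have [_ _ Pc] := PN N (leqnn _).
  rewrite -HkN /= in Pc; have := Pc isT; rewrite HkN HN => Hc.
  by rewrite EN.
- move=> k Hk; have [Pa _ _] := PN k (ltnW (ltnW Hk)).
  rewrite /=; apply: (@Gm_J e _ (D k.+2)); last exact: HDe.
  by apply: (Jmono Pa (leqnn _)); apply: HI.
- move=> k Hk; have [Pa Pb _] := PN k.+1 (ltnW Hk).
  have Hpos : 0 < Ef e a k.+2 := leq_ltn_trans (leq0n _) (Pb Hk).
  rewrite /= in Hpos *; apply: (@Gm_min e); by rewrite ltn_predL.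
Qed.

Lemma LeftPos_of_top a e N (B : nat -> nat) :
  B N = a -> B 0 = e -> (forall i, i < N -> B i.+1 < B i) ->
  (0 < N -> (B 1).+1 = e) ->
  (forall i, i < N -> ~~ Jr (B i.+1) (B i)) ->
  (forall i, i.+2 <= N -> Jr (B i.+2) (B i)) ->
  (forall i, i.+2 <= N -> ~~ Jr (B i.+2).+1 (B i)) ->
  LeftPos a e N (fun k => B (N - k)).
Proof.
move=> HN H0 H1 Hl H4 H2 H3; split=> /=.
- by rewrite subn0.
- by rewrite subnn.
- move=> k Hk; have -> : N - k = (N - k.+1).+1 by lia.
  apply: H1; lia.
- move=> Hp; have -> : N - N.-1 = 1 by lia. exact: Hl.
- move=> k Hk; have -> : N - k = (N - k.+1).+1 by lia.
  apply: H4; lia.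
- move=> k Hk; have -> : N - k = (N - k.+2).+2 by lia.
  apply: H2; lia.
- move=> k Hk; have -> : N - k = (N - k.+2).+2 by lia.
  apply: H3; lia.
Qed.

Definition Fm (y : nat) := y - find (fun d => Jr (y - d) y) (iota 0 y.+1).

Lemma Fm_ge x y : Jr x y -> x <= Fm y.
Proof.
move=> Hj; have Hxy := ltnW (ltnW (J_lt Hj)).
have Hf : find (fun d => Jr (y - d) y) (iota 0 y.+1) <= y - x.
  rewrite leqNgt; apply/negP=> Hlt.
  have := before_find 0 Hlt; rewrite nth_iota; last by lia.
  rewrite add0n; have -> : y - (y - x) = x by lia.
  by rewrite Hj.
rewrite /Fm; lia.
Qed.

Lemma Fm_J x y : Jr x y -> Jr (Fm y) y.
Proof.
move=> Hj; have Hxy := ltnW (ltnW (J_lt Hj)).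
have Hh : has (fun d => Jr (y - d) y) (iota 0 y.+1).
  apply/hasP; exists (y - x); first by rewrite mem_iota; lia.
  by have -> : y - (y - x) = x by lia.
have := nth_find 0 Hh; rewrite nth_iota ?add0n //.
by move: Hh; rewrite has_find size_iota.
Qed.

Lemma Fm_max y z : Fm y < z -> ~~ Jr z y.
Proof.
move=> Hz; case: (leqP z y) => Hzy; last first.
  by apply/negP=> /J_lt; lia.
have Hs : find (fun d => Jr (y - d) y) (iota 0 y.+1) <= y.+1.
  by have := find_size (fun d => Jr (y - d) y) (iota 0 y.+1); rewrite size_iota.
have Hlt : y - z < find (fun d => Jr (y - d) y) (iota 0 y.+1).
  by move: Hz; rewrite /Fm; lia.
have := before_find 0 Hlt; rewrite nth_iota; last by lia.
rewrite add0n; have -> : y - (y - z) = z by lia.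
by move=> ->.
Qed.

Fixpoint Bf (e k : nat) : nat :=
  match k with 0 => e | 1 => e.-1 | k'.+2 => Fm (Bf e k') end.

Lemma RtoL a e N E : RightPos a e N E -> exists D, LeftPos a e N D.
Proof.
case=> H0 HN Hinc H1 HB HI HM.
have Hle := incr_le Hinc.
pose Q i := [/\ E (N - i) <= Bf e i, (0 < i -> Bf e i < E (N - i).+1) &
                (i < N -> ~~ Jr (E (N - i).-1) (Bf e i))].
have key : forall i, (i <= N -> Q i) /\ (i.+1 <= N -> Q i.+1).
  elim=> [|i [IH1 IH2]].
    split=> HN1.
      split=> //=; first by rewrite subn0 HN.
      move=> Hp; rewrite subn0 -HN -{2}(prednK Hp); apply: HB; lia.
    have HN1' : (N - 1).+1 = N by lia.
    have Hp : E (N - 1) < E N by have := Hinc (N - 1); rewrite HN1'; apply; lia.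
    split=> /=.
    - by rewrite -HN; move: Hp; case: (E N).
    - rewrite (_ : (N - 1).+1 = N); last by lia.
      by move=> _; rewrite HN; move: Hp; rewrite HN; case: (e).
    - move=> H2; rewrite -HN; have := HM (N - 2).
      rewrite (_ : (N - 2).+2 = N); last by lia.
      by rewrite (_ : (N - 1).-1 = N - 2); [apply|lia].
  split=> // Hi2.
  have [Pa Pb Pc] := IH1 (ltnW (ltnW Hi2)).
  have [Qa Qb Qc] := IH2 (ltnW Hi2).
  set m := N - i.+2.
  have Em : N - i = m.+2 by rewrite /m; lia.
  have Em1 : N - i.+1 = m.+1 by rewrite /m; lia.
  rewrite Em in Pa Pb Pc; rewrite Em1 in Qa Qb Qc.
  have HJ : Jr (E m) (Bf e i).
    by apply: (Jmono (leqnn _) Pa); apply: HI; rewrite /m; lia.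
  have Hb : Fm (Bf e i) < E m.+1.
    rewrite ltnNge; apply/negP=> Hc.
    have := Pc (ltnW Hi2); rewrite /= (Jmono Hc (leqnn _) (Fm_J HJ)) //.
  split=> /=.
  - exact: Fm_ge.
  - by move=> _.
  - move=> Hi3; case: m Hb Em Em1 Pa Pb Pc Qa Qb Qc HJ => [|m'] Hb Em Em1 Pa Pb Pc Qa Qb Qc HJ.
      lia.
    rewrite /=; apply/negP=> Hc.
    have := HM m'; rewrite (_ : m'.+2 <= N) /=; last by lia.
    have Hm' : N - i.+2 = m'.+1 by lia.
    rewrite Hm' /= in Hc.
    move=> /(_ isT) /negP Hn; apply: Hn; apply: (Jmono (leqnn _) _ Hc).
    by move: Hb; case: (E m'.+2).
have PQ := fun i Hi => (key i).1 Hi.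
have Hep : 0 < N -> 0 < e.
  move=> Hp; rewrite -HN; apply: (leq_ltn_trans (leq0n (E N.-1))).
  by rewrite -{2}(prednK Hp); apply: Hinc; lia.
exists (fun k => Bf e (N - k)); apply: LeftPos_of_top => //.
- have [N0|Np] := posnP N; first by rewrite N0 /= -H0 -N0 HN.
  have [Pa Pb _] := PQ N (leqnn _); rewrite subnn H0 in Pa.
  have := Pb Np; rewrite subnn (H1 Np) ltnS => Pb'.
  by apply/eqP; rewrite eqn_leq Pa Pb'.
- move=> i Hi; have [Pa _ _] := PQ i (ltnW Hi).
  have [_ Qb _] := PQ i.+1 Hi.
  apply: (leq_trans (Qb isT)); rewrite (_ : (N - i.+1).+1 = N - i) //; lia.
- by move=> Hp /=; rewrite prednK // Hep.
- move=> i Hi; case: (ltnP i.+1 N) => Hi2.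
    apply: Fm_max.
    have [Pa _ _] := PQ i (ltnW Hi).
    have [_ Qb _] := PQ i.+2 Hi2.
    have [Ra _ _] := PQ i (ltnW Hi).
    have [_ Sb _] := PQ i.+1 Hi.
    rewrite /=; apply: (leq_trans (Qb isT)).
    rewrite (_ : (N - i.+2).+1 = N - i.+1); last by lia.
    have [Ta _ _] := PQ i.+1 Hi; exact: Ta.
  have HiN : i.+1 = N by lia.
  have [_ _ Pc] := PQ i (ltnW Hi).
  have := Pc Hi; rewrite (_ : (N - i).-1 = 0); last by lia.
  rewrite H0; suff -> : Bf e i.+1 = a by [].
  have [Pa Pb _] := PQ N (leqnn _); rewrite subnn H0 in Pa.
  have Np : 0 < N by lia.
  have := Pb Np; rewrite subnn (H1 Np) ltnS -HiN => Pb'.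
  by apply/eqP; rewrite eqn_leq Pb' HiN Pa.
- move=> i Hi /=; have [Pa _ _] := PQ i (ltnW (ltnW Hi)).
  apply: (@Fm_J (E (N - i.+2))).
  apply: (Jmono (leqnn _) Pa).
  rewrite (_ : N - i = (N - i.+2).+2); last by lia.
  apply: HI; lia.
- move=> i Hi /=; apply: Fm_max; exact: ltnSn.
Qed.

Lemma uniqL x x' y : Jr x y -> ~~ Jr x.+1 y -> Jr x' y -> ~~ Jr x'.+1 y -> x = x'.
Proof.
move=> H1 H2 H3 H4; case: (ltngtP x x') => // Hc.
- by move: H2; rewrite (Jmono Hc (leqnn _) H3).
- by move: H4; rewrite (Jmono Hc (leqnn _) H1).
Qed.

Lemma uniqR y x x' : Jr y x -> ~~ Jr y x.-1 -> Jr y x' -> ~~ Jr y x'.-1 -> x = x'.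
Proof.
move=> H1 H2 H3 H4; case: (ltngtP x x') => // Hc.
- by move: H4; rewrite (Jmono (leqnn _) (_ : x <= x'.-1) H1) //; lia.
- by move: H2; rewrite (Jmono (leqnn _) (_ : x' <= x.-1) H3) //; lia.
Qed.

Lemma left_bounds a e N A : LeftPos a e N A -> forall k, k <= N -> a <= A k <= e.
Proof.
case=> H0 HN Hinc _ _ _ _ k Hk; rewrite -H0 -HN !(incr_le Hinc) //.
Qed.

Lemma right_bounds a e N A : RightPos a e N A -> forall k, k <= N -> a <= A k <= e.
Proof.
case=> H0 HN Hinc _ _ _ _ k Hk; rewrite -H0 -HN !(incr_le Hinc) //.
Qed.

Lemma left_top a e N A a' N' A' : LeftPos a e N A -> LeftPos a' e N' A' ->
  forall i, i <= N -> i <= N' -> A (N - i) = A' (N' - i).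
Proof.
case=> H0 HN Hinc Hl HB HI HM; case=> H0' HN' Hinc' Hl' HB' HI' HM'.
have key : forall i, (i <= N -> i <= N' -> A (N - i) = A' (N' - i)) /\
                 (i.+1 <= N -> i.+1 <= N' -> A (N - i.+1) = A' (N' - i.+1)).
  elim=> [|i [IH1 IH2]].
    split; first by rewrite !subn0 HN HN'.
    move=> h1 h2; rewrite !subn1; apply/eqP.
    by rewrite -eqSS Hl ?Hl' //; lia.
  split=> // h1 h2.
  have E1 : N - i = (N - i.+2).+2 by lia.
  have E2 : N' - i = (N' - i.+2).+2 by lia.
  have := IH1 (ltnW (ltnW h1)) (ltnW (ltnW h2)); rewrite E1 E2 => Heq.
  apply: (@uniqL _ _ (A (N - i.+2).+2)).
  - by apply: HI; lia.
  - by apply: HM; lia.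
  - by rewrite Heq; apply: HI'; lia.
  - by rewrite Heq; apply: HM'; lia.
by move=> i h1 h2; apply: (key i).1.
Qed.

Lemma left_cmp a e N A a' e' N' A' : LeftPos a e N A -> LeftPos a' e' N' A' ->
  e' <= A N.-1 -> forall k, k.*2 <= N' -> k.*2 < N ->
  A' (N' - k.*2) <= A (N.-1 - k.*2).
Proof.
case=> H0 HN Hinc Hl HB HI HM; case=> H0' HN' Hinc' Hl' HB' HI' HM' He.
elim=> [|k IH] h1 h2; first by rewrite !subn0 HN'.
have h1' : k.*2 <= N' by move: h1; rewrite doubleS; lia.
have h2' : k.*2 < N by move: h2; rewrite doubleS; lia.
have := IH h1' h2'.
have E1 : N' - k.*2 = (N' - k.+1.*2).+2 by rewrite doubleS; lia.
have E2 : N.-1 - k.*2 = (N.-1 - k.+1.*2).+2 by rewrite doubleS in h2 *; lia.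
rewrite E1 E2 => Hle.
rewrite leqNgt; apply/negP=> Hc.
have hh1 : (N' - k.+1.*2).+1 < N' by rewrite doubleS in h1 *; lia.
have HJ := HI' (N' - k.+1.*2) hh1.
have HJ2 := Jmono (leqnn _) Hle HJ.
have hh2 : (N.-1 - k.+1.*2).+1 < N by rewrite doubleS in h2 *; lia.
have := HM (N.-1 - k.+1.*2) hh2.
by rewrite (Jmono Hc (leqnn _) HJ2).
Qed.

Lemma right_bot a e N E e' N' E' : RightPos a e N E -> RightPos a e' N' E' ->
  forall k, k <= N -> k <= N' -> E k = E' k.
Proof.
case=> H0 HN Hinc H1 HB HI HM; case=> H0' HN' Hinc' H1' HB' HI' HM'.
have key : forall k, (k <= N -> k <= N' -> E k = E' k) /\
                 (k.+1 <= N -> k.+1 <= N' -> E k.+1 = E' k.+1).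
  elim=> [|k [IH1 IH2]].
    by split; [rewrite H0 H0' | move=> h1 h2; rewrite H1 ?H1'].
  split=> // h1 h2.
  have Heq := IH1 (ltnW (ltnW h1)) (ltnW (ltnW h2)).
  apply: (@uniqR (E k)); [exact: HI | exact: HM | rewrite Heq; exact: HI' | rewrite Heq; exact: HM'].
by move=> k h1 h2; apply: (key k).1.
Qed.

Lemma left_drop a e N A : LeftPos a e N.+1 A -> LeftPos (A 1) e N (fun k => A k.+1).
Proof.
case=> H0 HN Hinc Hl HB HI HM; split=> //.
- by move=> k Hk; apply: Hinc.
- by move=> Hp; rewrite prednK //; apply: Hl.
- by move=> k Hk; apply: HB.
- by move=> k Hk; apply: HI.
- by move=> k Hk; apply: HM.
Qed.

Lemma right_trunc a e N E M : RightPos a e N E -> M <= N -> RightPos a (E M) M E.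
Proof.
case=> H0 HN Hinc H1 HB HI HM HMN; split=> //.
- by move=> k Hk; apply: Hinc; lia.
- by move=> Hp; apply: H1; lia.
- by move=> k Hk; apply: HB; lia.
- by move=> k Hk; apply: HI; lia.
- by move=> k Hk; apply: HM; lia.
Qed.

End Pos.

Section Shift.
Variables (Jq Jp : nat -> nat -> bool) (al l : nat).
Hypothesis Hs : forall x y, y <= l -> Jq x y = Jp (al + x) (al + y).

Lemma left_shift N D : LeftPos Jq 0 l N D -> LeftPos Jp al (al + l) N (fun k => al + D k).
Proof.
move=> HL; have Hb := left_bounds HL.
case: HL => H0 HN Hinc Hl HB HI HM; split=> //.
- by rewrite H0 addn0.
- by rewrite HN.
- by move=> k Hk; rewrite ltn_add2l; apply: Hinc.
- by move=> Hp; rewrite -addnS Hl.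
- move=> k Hk; rewrite -Hs; first exact: HB.
  by have /andP[] := Hb k.+1 Hk.
- move=> k Hk; rewrite -Hs; first exact: HI.
  by have /andP[] := Hb k.+2 Hk.
- move=> k Hk; rewrite -addnS -Hs; first exact: HM.
  by have /andP[] := Hb k.+2 Hk.
Qed.

Lemma left_unshift N A : LeftPos Jp al (al + l) N A -> LeftPos Jq 0 l N (fun k => A k - al).
Proof.
move=> HL; have Hb := left_bounds HL.
have Hb' : forall k, k <= N -> al + (A k - al) = A k.
  by move=> k Hk; have := Hb k Hk; lia.
case: HL => H0 HN Hinc Hl HB HI HM; split=> /=.
- by rewrite H0 subnn.
- by rewrite HN addKn.
- move=> k Hk; have := Hinc k Hk; have := Hb k (ltnW Hk); lia.
- by move=> Hp; have := Hl Hp; have := Hb N.-1 (leq_pred _); lia.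
- move=> k Hk; rewrite Hs ?Hb' //; first exact: HB.
  - exact: ltnW.
  - by have := Hb k.+1 Hk; lia.
- move=> k Hk; rewrite Hs ?Hb' //; first exact: HI.
  - lia.
  - by have := Hb k.+2 Hk; lia.
- move=> k Hk; rewrite Hs; last by have := Hb k.+2 Hk; lia.
  rewrite Hb' // (_ : al + (A k - al).+1 = (A k).+1); first exact: HM.
  by have := Hb k (ltnW (ltnW Hk)); lia.
Qed.

Lemma right_shift N D : RightPos Jq 0 l N D -> RightPos Jp al (al + l) N (fun k => al + D k).
Proof.
move=> HL; have Hb := right_bounds HL.
case: HL => H0 HN Hinc H1 HB HI HM; split=> //.
- by rewrite H0 addn0.
- by rewrite HN.
- by move=> k Hk; rewrite ltn_add2l; apply: Hinc.
- by move=> Hp; rewrite H1 // addn1.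
- move=> k Hk; rewrite -Hs; first exact: HB.
  by have /andP[] := Hb k.+1 Hk.
- move=> k Hk; rewrite -Hs; first exact: HI.
  by have /andP[] := Hb k.+2 Hk.
- move=> k Hk; have Hp : 0 < D k.+2.
    have := Hinc k.+1 Hk; lia.
  rewrite (_ : (al + D k.+2).-1 = al + (D k.+2).-1); last by lia.
  rewrite -Hs; first exact: HM.
  by have := Hb k.+2 Hk; lia.
Qed.

Lemma right_unshift N A : RightPos Jp al (al + l) N A -> RightPos Jq 0 l N (fun k => A k - al).
Proof.
move=> HL; have Hb := right_bounds HL.
have Hb' : forall k, k <= N -> al + (A k - al) = A k.
  by move=> k Hk; have := Hb k Hk; lia.
case: HL => H0 HN Hinc H1 HB HI HM; split=> /=.
- by rewrite H0 subnn.
- by rewrite HN addKn.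
- move=> k Hk; have := Hinc k Hk; have := Hb k (ltnW Hk); lia.
- by move=> Hp; rewrite H1 //; lia.
- move=> k Hk; rewrite Hs ?Hb' //; first exact: HB.
  - exact: ltnW.
  - by have := Hb k.+1 Hk; lia.
- move=> k Hk; rewrite Hs ?Hb' //; first exact: HI.
  - lia.
  - by have := Hb k.+2 Hk; lia.
- move=> k Hk; have Hp := Hinc k.+1 Hk; have Hk1 := Hb k.+1 (ltnW Hk).
  rewrite Hs; last by have := Hb k.+2 Hk; lia.
  rewrite (_ : al + (A k.+2 - al).-1 = (A k.+2).-1); last by lia.
  rewrite Hb'; [exact: HM | lia].
Qed.
End Shift.

Section Glue.
Variables (V E : finType) (s t : E -> V) (rels : seq (seq E)).
Hypothesis Hlen : forall r, r \in rels -> 2 <= size r.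

Definition IW (w : seq E) := has (fun r => infix r w) rels.
Definition win (w : seq E) (x y : nat) := take (y - x) (drop x w).
Definition Jw (w : seq E) (x y : nat) := IW (win w x y).

Lemma IW_infix w1 w2 : infix w1 w2 -> IW w1 -> IW w2.
Proof.
move=> Hi /hasP[r Hr Hri]; apply/hasP; exists r => //; exact: infix_trans Hri Hi.
Qed.

Lemma IW_short w : size w <= 1 -> ~~ IW w.
Proof.
move=> Hs; apply/hasP=> -[r Hr /size_infix Hri].
have := Hlen Hr; have := leq_trans Hri Hs; lia.
Qed.

Lemma win_cat w x y z : x <= y -> y <= z -> win w x y ++ win w y z = win w x z.
Proof.
move=> Hxy Hyz; rewrite /win (_ : z - x = (y - x) + (z - y)); last by lia.
by rewrite takeD drop_drop subnK.
Qed.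

Lemma win_dropn w x y j : drop j (win w x y) = win w (x + j) y.
Proof.
rewrite /win; case: (leqP y (x + j)) => Hy.
  rewrite (_ : y - (x + j) = 0); last by lia.
  rewrite take0; apply/eqP; rewrite -size_eq0 size_drop size_take_min; lia.
rewrite (_ : y - x = (y - (x + j)) + j); last by lia.
by rewrite -take_drop drop_drop addnC.
Qed.

Lemma win_infix w x y x' y' : x <= x' -> y' <= y -> infix (win w x' y') (win w x y).
Proof.
move=> Hx Hy; case: (leqP y' x') => Hxy.
  by rewrite /win (_ : y' - x' = 0) ?take0 ?infix0s //; lia.
rewrite -(win_cat w Hx (_ : x' <= y)); last by lia.
rewrite -(win_cat w (_ : x' <= y') Hy); last by lia.
by apply/infixP; exists (win w x x'), (win w y' y).
Qed.

Lemma Jw_mono w x y x' y' : x <= x' -> y' <= y -> Jw w x' y' -> Jw w x y.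
Proof. by move=> Hx Hy; apply: IW_infix; apply: win_infix. Qed.

Lemma Jw_short w x : ~~ Jw w x x.+1.
Proof. by apply: IW_short; rewrite /win size_take_min; lia. Qed.

Lemma Jw_sub w al l x y : al + l <= size w -> y <= l ->
  Jw (take l (drop al w)) x y = Jw w (al + x) (al + y).
Proof.
move=> Hal Hy; rewrite /Jw /win subnDl.
case: (leqP x y) => Hxy; last by rewrite (_ : y - x = 0) ?take0 //; lia.
have -> : drop x (take l (drop al w)) = take (l - x) (drop x (drop al w)).
  by rewrite [RHS]take_drop subnK //; lia.
by rewrite take_takel ?drop_drop ?(addnC x) //; lia.
Qed.

Definition Dof (xs : seq (qpath V E)) k := sumn (map (@plen V E) (take k xs)).

Lemma size_flat (ys : seq (qpath V E)) : size (flatten (map (@arrs V E) ys)) = sumn (map (@plen V E) ys).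
Proof. by rewrite size_flatten /shape -map_comp. Qed.

Lemma Dof_S xs k d : k < size xs -> Dof xs k.+1 = Dof xs k + plen (nth d xs k).
Proof. by move=> Hk; rewrite /Dof (take_nth d Hk) -cats1 map_cat sumn_cat /= addn0. Qed.

Lemma Dof_size xs : Dof xs (size xs) = size (flatten (map (@arrs V E) xs)).
Proof. by rewrite /Dof take_size size_flat. Qed.

Lemma Dof_mono xs i j : i <= j -> Dof xs i <= Dof xs j.
Proof.
move=> Hij; rewrite /Dof -(subnKC Hij) takeD map_cat sumn_cat; exact: leq_addr.
Qed.

Lemma win_block xs k d : k < size xs ->
  win (flatten (map (@arrs V E) xs)) (Dof xs k) (Dof xs k.+1) = arrs (nth d xs k).
Proof.
move=> Hk; have Hf : flatten (map (@arrs V E) xs) = flatten (map (@arrs V E) (take k xs)) ++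
    (arrs (nth d xs k) ++ flatten (map (@arrs V E) (drop k.+1 xs))).
  by rewrite -{1}(cat_take_drop k xs) (drop_nth d Hk) map_cat flatten_cat.
rewrite (Dof_S d Hk) /win addKn Hf drop_size_cat; last by rewrite size_flat.
by rewrite take_size_cat.
Qed.

Lemma win_block2 xs k d : k.+1 < size xs ->
  win (flatten (map (@arrs V E) xs)) (Dof xs k) (Dof xs k.+2) =
  arrs (nth d xs k) ++ arrs (nth d xs k.+1).
Proof.
move=> Hk; rewrite -(win_cat _ (Dof_mono xs (leqnSn k)) (Dof_mono xs (leqnSn k.+1))).
by rewrite !(win_block d) //; apply: ltnW.
Qed.

Lemma valid_nth (v : V) (w : seq E) a0 : validw s t w ->
  (if w is a :: _ then s a == v else true) ->
  forall i, i < size w -> s (nth a0 w i) = last v (map t (take i w)).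
Proof.
elim: w v => [|a w IH] v //= Hw Ha [|i] Hi /=.
  exact/eqP.
have H1 : validw s t w := path_sorted Hw.
have H2 : is_true (if w is b :: _ then s b == t a else true).
  by move: Hw; case: (w) => //= b w' /andP[]; rewrite eq_sym.
have Hi' : i < size w by [].
exact: (IH (t a) H1 H2 i Hi').
Qed.

Lemma tgt_subp q i l : tgt t (subp t q i l) = vtx_at t q (i + l).
Proof.
by rewrite /tgt /subp /vtx_at /= takeD map_cat last_cat.
Qed.

Lemma valid_subp q i l : valid s t q -> valid s t (subp t q i l).
Proof.
rewrite /valid /subp /arrs /src /vtx_at /=.
case/andP=> Hw Hh; apply/andP; split.
  exact: take_sorted (drop_sorted _ Hw).
case Hc: (take l (drop i q.2)) => [|a r] //=.
have Hi : i < size q.2.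
  rewrite ltnNge; apply/negP=> Hs; move: Hc; rewrite drop_oversize //.
have Hl : 0 < l by case: (l) Hc => //; rewrite take0.
have -> : a = nth a q.2 i.
  by rewrite -[i]addn0 -nth_drop -(nth_take a Hl) Hc.
apply/eqP; exact: (@valid_nth (src q) q.2 a Hw Hh i Hi).
Qed.

End Glue.

Section Glue2.
Variables (V E : finType) (s t : E -> V) (rels : seq (seq E)).
Hypothesis Hlen : forall r, r \in rels -> 2 <= size r.

Notation Jw := (Jw rels).
Notation IW := (IW rels).

Lemma arrs_subp_drop (x : qpath V E) j : arrs (subp t x j (plen x - j)) = drop j (arrs x).
Proof. by rewrite /subp /= take_oversize // size_drop. Qed.

Lemma arrs_subp0 (x : qpath V E) l : arrs (subp t x 0 l) = take l (arrs x).
Proof. by rewrite /subp /= drop0. Qed.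

Lemma win_taken (w : seq E) x y l : l <= y - x -> take l (win w x y) = win w x (x + l).
Proof. by move=> Hl; rewrite /win take_takel // addKn. Qed.

Lemma flatten_wins (w : seq E) (D : nat -> nat) M : (forall k, k < M -> D k <= D k.+1) ->
  flatten [seq win w (D k) (D k.+1) | k <- iota 0 M] = win w (D 0) (D M).
Proof.
elim: M => [|M IH] HD; first by rewrite /= /win subnn take0.
rewrite -addn1 iotaD map_cat flatten_cat IH; last by move=> k Hk; apply: HD; lia.
have H0M : forall j, j <= M -> D 0 <= D j.
  elim=> // j IHj Hj; apply: leq_trans (IHj (ltnW Hj)) (HD j _); lia.
rewrite /= cats0 add0n win_cat ?addn1 //; [exact: H0M | exact: HD].
Qed.

Lemma left_pos z q us : left_decomp s t rels z q us ->
  Posz (size us) = (z + 1)%R /\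
  LeftPos (Jw (arrs q)) 0 (plen q) (size us) (Dof (rev us)).
Proof.
move=> [Hsz [Hv Hm]]; split => //.
case: us Hsz Hm => [|u0 rest] Hsz Hm.
  have Hp : plen q = 0 by rewrite /plen; move: Hm; rewrite /arrs => ->.
  by split=> //; rewrite /Dof /= ?Hp.
move: Hm => [Hu0 [HB [Hc Hq]]].
set us := u0 :: rest in Hsz HB Hc Hq *.
set N := size us; set xs := rev us.
have HxN : size xs = N by rewrite size_rev.
have Hw : arrs q = flatten (map (@arrs V E) xs) by rewrite [in LHS]Hq /= map_rev.
have Hnth : forall k, k < N -> nth q xs k = nth q us (N - k.+1).
  by move=> k Hk; rewrite nth_rev.
have Hne : forall i, i < N -> 0 < plen (nth q us i).
  case=> [|i] Hi; first by rewrite /= Hu0.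
  have [_ [HI _]] := Hc i Hi.
  rewrite lt0n; apply/negP=> /eqP H0.
  have := HB (nth q us i) (mem_nth _ (ltnW Hi)); case/andP=> _ /negP; apply.
  move: HI; rewrite /inI /pcat /=.
  by have -> : arrs (nth q rest i) = [::] by apply: size0nil; exact: H0.
have Hnex : forall k, k < N -> 0 < plen (nth q xs k).
  by move=> k Hk; rewrite Hnth //; apply: Hne; lia.
have Hwin : forall k, k < N ->
    win (arrs q) (Dof xs k) (Dof xs k.+1) = arrs (nth q xs k).
  by move=> k Hk; rewrite Hw (win_block q) // HxN.
have Hwin2 : forall k, k.+1 < N ->
    win (arrs q) (Dof xs k) (Dof xs k.+2) = arrs (pcat (nth q us (N - k.+1)) (nth q us (N - k.+2))).
  move=> k Hk; rewrite Hw (win_block2 q) ?HxN // !Hnth //; last by lia.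
have HDS : forall k, k < N -> Dof xs k.+1 = Dof xs k + plen (nth q xs k).
  by move=> k Hk; rewrite (Dof_S q) // HxN.
split.
- by rewrite /Dof take0.
- by rewrite -HxN Dof_size -Hw.
- by move=> k Hk; rewrite HDS // -addn1 leq_add2l; apply: Hnex.
- move=> HN0; have HN1 : N.-1 < N by rewrite ltn_predL.
  have := HDS _ HN1; rewrite Hnth // prednK // subnn /= Hu0 addn1 => <-.
  by rewrite -HxN Dof_size -Hw.
- move=> k Hk; rewrite /Jw Hwin //.
  have Hm : nth q xs k \in us by rewrite -mem_rev mem_nth // HxN.
  by have /andP[] := HB _ Hm.
- move=> k Hk; rewrite /Jw Hwin2 //.
  have := Hc (N - k.+2); rewrite (_ : (N - k.+2).+1 = N - k.+1); last by lia.
  by case; [lia | move=> _ []].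
- move=> k Hk; rewrite /Jw -addn1 -win_dropn Hwin2 //.
  have := Hc (N - k.+2); rewrite (_ : (N - k.+2).+1 = N - k.+1); last by lia.
  case; [lia | move=> _ [HI HM]].
  have Hpl : 0 < plen (pcat (nth q us (N - k.+1)) (nth q us (N - k.+2))).
    by have := Hne (N - k.+1); rewrite /plen /pcat /arrs /= size_cat; lia.
  by have := HM 1 Hpl; rewrite /inI arrs_subp_drop.
Qed.
Lemma blocks_facts q N (D : nat -> nat) :
  D 0 = 0 -> D N = plen q -> (forall k, k < N -> D k < D k.+1) ->
  let xs := [seq subp t q (D k) (D k.+1 - D k) | k <- iota 0 N] in
  [/\ size xs = N,
      (forall k, k < N -> nth q xs k = subp t q (D k) (D k.+1 - D k)),
      flatten (map (@arrs V E) xs) = arrs q &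
      (forall k, k.+1 < N -> composable t (nth q xs k) (nth q xs k.+1) /\
         arrs (pcat (nth q xs k) (nth q xs k.+1)) = win (arrs q) (D k) (D k.+2))].
Proof.
move=> H0 HN Hinc xs.
have Hsx : size xs = N by rewrite size_map size_iota.
have Hnx : forall k, k < N -> nth q xs k = subp t q (D k) (D k.+1 - D k).
  by move=> k Hk; rewrite (nth_map 0) ?size_iota // nth_iota.
split=> //.
- rewrite -map_comp (_ : (@arrs V E) \o _ = fun k => win (arrs q) (D k) (D k.+1)) //.
  rewrite flatten_wins; last by move=> k Hk; apply: ltnW; apply: Hinc.
  by rewrite H0 HN /win subn0 drop0 take_size.
- move=> k Hk; rewrite !Hnx //; last exact: ltnW.
  split.
    rewrite /composable tgt_subp /subp /= subnKC //; apply: ltnW; apply: Hinc; exact: ltnW.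
  rewrite /pcat /= win_cat //; apply: ltnW; apply: Hinc => //; exact: ltnW.
Qed.

Lemma pos_left q N D : valid s t q -> LeftPos (Jw (arrs q)) 0 (plen q) N D ->
  exists us, size us = N /\ left_decomp s t rels (Posz N - 1)%R q us.
Proof.
move=> Hv HL; have Hb := left_bounds HL.
case: HL => H0 HN Hinc Hl HB HI HM.
have [Hsx Hnx Hflat Hcons] := blocks_facts H0 HN Hinc.
set xs := [seq subp t q (D k) (D k.+1 - D k) | k <- iota 0 N] in Hsx Hnx Hflat Hcons.
exists (rev xs); split; first by rewrite size_rev.
split; first by rewrite size_rev Hsx subrK.
split=> //.
case Hus: (rev xs) => [|u0 rest].
  have HN0 : N = 0 by rewrite -Hsx -size_rev Hus.
  by apply: size0nil; change (plen q = 0); rewrite -HN HN0 H0.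
have HN0 : 0 < N by rewrite -Hsx -size_rev Hus.
have Hu0 : u0 = nth q xs N.-1.
  have -> : u0 = nth q (rev xs) 0 by rewrite Hus.
  by rewrite nth_rev ?Hsx // subn1.
rewrite -Hus; split; last split; last split.
- rewrite Hu0 Hnx ?ltn_predL // /plen /= size_takel.
    by rewrite prednK // HN -(Hl HN0) subSnn.
  rewrite size_drop prednK //; change (size (arrs q)) with (plen q).
  by rewrite -HN; have := Hl HN0; lia.
- move=> u; rewrite mem_rev => /(nthP q) [k Hk <-].
  rewrite Hsx in Hk; apply/andP; split; first by rewrite Hnx //; apply: valid_subp.
  by rewrite Hnx //; apply: HB.
- move=> i; rewrite size_rev Hsx => Hi.
  rewrite !nth_rev ?Hsx //; try lia.
  have Hlt : (N - i.+2).+1 < N by lia.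
  have [Hc Ha] := Hcons (N - i.+2) Hlt.
  rewrite (_ : (N - i.+2).+1 = N - i.+1) in Hc Ha; last by lia.
  rewrite (_ : (N - i.+1).+1 = N - i) in Ha; last by lia.
  split=> //; split.
    rewrite /inI Ha; have := HI (N - i.+2) Hlt.
    by rewrite (_ : (N - i.+2).+2 = N - i); last by lia.
  move=> j /andP[Hj0 Hjp]; rewrite /inI arrs_subp_drop Ha win_dropn.
  apply/negP=> Hc'; move/negP: (HM (N - i.+2) Hlt); apply.
  rewrite (_ : (N - i.+2).+2 = N - i); last by lia.
  by apply: (Jw_mono _ (leqnn _) Hc'); lia.
- rewrite map_rev revK Hflat.
  have -> : last u0 (rev xs) = nth q xs 0.
    rewrite -nth_last nth_rev size_rev ?Hsx ?prednK ?subnn //.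
    by apply: set_nth_default; rewrite Hsx.
  rewrite Hnx // /subp /vtx_at /= H0 take0 /=.
  by rewrite /src /arrs -surjective_pairing.
Qed.

Lemma right_pos z q vs : right_decomp s t rels z q vs ->
  Posz (size vs) = (z + 1)%R /\
  RightPos (Jw (arrs q)) 0 (plen q) (size vs) (Dof vs).
Proof.
move=> [Hsz [Hv Hm]]; split => //.
case: vs Hsz Hm => [|v0 rest] Hsz Hm.
  have Hp : plen q = 0 by rewrite /plen; move: Hm; rewrite /arrs => ->.
  by split=> //; rewrite /Dof /= ?Hp.
move: Hm => [Hv0 [HB [Hc Hq]]].
set vs := v0 :: rest in Hsz HB Hc Hq *.
set N := size vs.
have Hw : arrs q = flatten (map (@arrs V E) vs) by rewrite [in LHS]Hq.
have Hne : forall i, i < N -> 0 < plen (nth q vs i).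
  case=> [|i] Hi; first by rewrite /= Hv0.
  have [_ [HI _]] := Hc i Hi.
  rewrite lt0n; apply/negP=> /eqP H0.
  have := HB (nth q vs i) (mem_nth _ (ltnW Hi)); case/andP=> _ /negP; apply.
  move: HI; rewrite /inI /pcat /=.
  have -> : arrs (nth q rest i) = [::] by apply: size0nil; exact: H0.
  by rewrite cats0.
have Hwin : forall k, k < N ->
    win (arrs q) (Dof vs k) (Dof vs k.+1) = arrs (nth q vs k).
  by move=> k Hk; rewrite Hw (win_block q).
have Hwin2 : forall k, k.+1 < N ->
    win (arrs q) (Dof vs k) (Dof vs k.+2) = arrs (pcat (nth q vs k) (nth q vs k.+1)).
  by move=> k Hk; rewrite Hw (win_block2 q).
have HDS : forall k, k < N -> Dof vs k.+1 = Dof vs k + plen (nth q vs k).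
  by move=> k Hk; rewrite (Dof_S q).
split.
- by rewrite /Dof take0.
- by rewrite Dof_size -Hw.
- by move=> k Hk; rewrite HDS // -addn1 leq_add2l; apply: Hne.
- by move=> HN0; rewrite HDS // /= Hv0 /Dof take0.
- move=> k Hk; rewrite /Jw Hwin //.
  by have /andP[] := HB _ (mem_nth q Hk).
- move=> k Hk; rewrite /Jw Hwin2 //.
  by case: (Hc k Hk) => _ [].
- move=> k Hk; case: (Hc k Hk) => _ [HI HM].
  have Hp1 := HDS k (ltnW Hk); have Hp2 := HDS k.+1 Hk.
  have Hn1 := Hne k (ltnW Hk); have Hn2 := Hne k.+1 Hk.
  have Hpl : plen (pcat (nth q vs k) (nth q vs k.+1)) = Dof vs k.+2 - Dof vs k.
    have Hpc : plen (pcat (nth q vs k) (nth q vs k.+1)) =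
      plen (nth q vs k) + plen (nth q vs k.+1) := size_cat _ _.
    lia.
  have Hl : (Dof vs k.+2).-1 - Dof vs k < plen (pcat (nth q vs k) (nth q vs k.+1)).
    by rewrite Hpl; lia.
  have := HM _ Hl; rewrite /inI arrs_subp0 -Hwin2 // win_taken; last by lia.
  by rewrite (_ : Dof vs k + _ = (Dof vs k.+2).-1) //; lia.
Qed.

Lemma pos_right q N D : valid s t q -> RightPos (Jw (arrs q)) 0 (plen q) N D ->
  exists vs, size vs = N /\ right_decomp s t rels (Posz N - 1)%R q vs.
Proof.
move=> Hv HL; have Hb := right_bounds HL.
case: HL => H0 HN Hinc H1 HB HI HM.
have [Hsx Hnx Hflat Hcons] := blocks_facts H0 HN Hinc.
set xs := [seq subp t q (D k) (D k.+1 - D k) | k <- iota 0 N] in Hsx Hnx Hflat Hcons.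
exists xs; split=> //.
split; first by rewrite Hsx subrK.
split=> //.
case Hxs: xs => [|u0 rest].
  have HN0 : N = 0 by rewrite -Hsx Hxs.
  by apply: size0nil; change (plen q = 0); rewrite -HN HN0 H0.
have HN0 : 0 < N by rewrite -Hsx Hxs.
have Hu0 : u0 = nth q xs 0 by rewrite Hxs.
rewrite -Hxs; split; last split; last split.
- rewrite Hu0 Hnx // /plen /= size_takel; first by rewrite H1 // H0.
  rewrite size_drop; change (size (arrs q)) with (plen q).
  by rewrite -HN H0 subn0 H1 //; have := Hb 1 HN0; lia.
- move=> u /(nthP q) [k Hk <-].
  rewrite Hsx in Hk; apply/andP; split; first by rewrite Hnx //; apply: valid_subp.
  by rewrite Hnx //; apply: HB.
- move=> i; rewrite Hsx => Hi.
  have [Hc Ha] := Hcons i Hi.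
  split=> //; split; first by rewrite /inI Ha; exact: HI.
  have Hpl : plen (pcat (nth q xs i) (nth q xs i.+1)) = D i.+2 - D i.
    change (size (arrs (pcat (nth q xs i) (nth q xs i.+1))) = D i.+2 - D i).
    rewrite Ha /win size_takel // size_drop; change (size (arrs q)) with (plen q).
    by have := Hb i.+2 Hi; lia.
  move=> l Hl; rewrite Hpl in Hl.
  rewrite /inI arrs_subp0 Ha win_taken; last by lia.
  apply/negP=> Hc'; move/negP: (HM i Hi); apply.
  by apply: (Jw_mono (leqnn _) _ Hc'); lia.
- rewrite Hflat Hu0 Hnx // /subp /vtx_at /= H0 take0 /=.
  by rewrite /src /arrs -surjective_pairing.
Qed.

End Glue2.

End Aux.
Import Aux.

Theorem mainTheorem4 (V E : finType) (s t : E -> V) (rels : seq (seq E))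
  (Hrels_path : forall r, r \in rels -> validw s t r)
  (Hrels_len : forall r, r \in rels -> 2 <= size r)
  (Hfindim : exists N, forall p : qpath V E, valid s t p -> N <= plen p -> inI rels p)
  (n : nat) (Hn : ~~ odd n) (p : qpath V E) (Hp : Gamma s t rels (Posz n) p) :
  (forall o : nat * nat,
     Sub_occ s t rels (Posz n) p o <->
       (o = sigma_occ s t rels (Posz n - 1)%R (Posz n) p \/ o = pi_occ s t rels (Posz n - 1)%R (Posz n) p)) /\
  sigma_occ s t rels (Posz n - 1)%R (Posz n) p <> pi_occ s t rels (Posz n - 1)%R (Posz n) p.
Proof.
have Jm : forall w0 : seq E, forall x y x' y', x <= x' -> y' <= y ->
    Jw rels w0 x' y' -> Jw rels w0 x y.
  by move=> w0 x y x' y' H1 H2; apply: Jw_mono.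
have Js : forall w0 : seq E, forall x, ~~ Jw rels w0 x x.+1 := Jw_short Hrels_len.
set w := arrs p; set L := plen p.
have HLw : size w = L by [].
have Hus : left_decomp s t rels (Posz n) p (left_dec s t rels (Posz n) p).
  by rewrite /left_dec; apply: epsilon_spec; exact: Hp.
set us := left_dec s t rels (Posz n) p in Hus *.
have Hvp : valid s t p by case: Hus => _ [].
have [Hsz HL] := left_pos Hus.
have Hsz' : size us = n.+1 by move: Hsz; rewrite -[1%R]/(Posz 1) -PoszD addn1; case.
rewrite Hsz' in HL; set D := Dof (rev us) in HL.
have [E0 HE0] := LtoR (Jm w) HL.
have [vs0 [_ Hvs0]] := pos_right Hvp HE0.
have Hvs : right_decomp s t rels (Posz n) p (right_dec s t rels (Posz n) p).
  rewrite /right_dec; apply: epsilon_spec; exists vs0.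
  by move: Hvs0; rewrite -addn1 PoszD addrK.
set vs := right_dec s t rels (Posz n) p in Hvs *.
have [Hszv HR] := right_pos Hvs.
have Hszv' : size vs = n.+1 by move: Hszv; rewrite -[1%R]/(Posz 1) -PoszD addn1; case.
rewrite Hszv' in HR; set Ep := Dof vs in HR.
have HD1 : 0 < D 1 by have := lpinc HL (ltn0Sn n); rewrite (lp0 HL).
have HD1L : D 1 <= L by have /andP[] := @left_bounds _ _ _ _ _ HL 1 (ltn0Sn n).
have Hsig : sigma_occ s t rels (Posz n - 1)%R (Posz n) p = (D 1, L - D 1).
  rewrite /sigma_occ -/us subrK /=.
  suff Hsum : D 1 + sumn (map (@plen V E) (take n us)) = L.
    rewrite -/L; congr pair; lia.
  rewrite /L -(lpN HL) /D /Dof [take n.+1 _]take_oversize ?size_rev ?Hsz' //.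
  have H1 : take 1 (rev us) = rev (drop n us).
    by rewrite -{1}(cat_take_drop n us) rev_cat take_size_cat // size_rev size_drop Hsz' subSnn.
  rewrite H1 -[in RHS](cat_take_drop n us) !map_rev !sumn_rev map_cat sumn_cat.
  by rewrite addnC.
have Hpi : pi_occ s t rels (Posz n - 1)%R (Posz n) p = (0, Ep n).
  by rewrite /pi_occ -/vs subrK.
rewrite Hsig Hpi; split; last by case; lia.
move=> [a l]; split.
- case=> /= Hal [uq Huq].
  set q := subp t p a l in Huq.
  have [Hszq HLq] := left_pos Huq.
  have Hszq' : size uq = n by move: Hszq; rewrite subrK; case.
  rewrite Hszq' in HLq.
  have Hpq : plen q = l.
    by rewrite /plen /q /= size_takel // size_drop; move: Hal; rewrite /L /plen /arrs; lia.
  have Hs : forall x y, y <= l -> Jw rels (arrs q) x y = Jw rels w (a + x) (a + y).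
    by move=> x y Hy; apply: Jw_sub.
  rewrite Hpq in HLq.
  have HLs := left_shift Hs HLq.
  have [HaL|HaL] := boolP (a + l == L).
    rewrite (eqP HaL) in HLs.
    have := left_top (Jm w) HL HLs (leqnSn n) (leqnn n).
    rewrite subSnn subnn /= (lp0 HLq) addn0 => Ha.
    left; rewrite -Ha; congr pair; move/eqP: HaL; lia.
  right.
  have Hle : a + l <= D n.+1.-1.
    have := lplast HL (ltn0Sn n); rewrite /= => HDn.
    move: HaL Hal; rewrite -HDn; lia.
  have Hk1 : n./2.*2 <= n by rewrite even_halfK.
  have Hk2 : n./2.*2 < n.+1 by rewrite even_halfK.
  have := left_cmp (Jm w) HL HLs Hle Hk1 Hk2.
  rewrite even_halfK //= subnn (lp0 HL) (lp0 HLq) addn0 leqn0 => /eqP Ha0.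
  have [Eq HEq] := LtoR (Jm _) HLq.
  have HEqs := right_shift Hs HEq.
  rewrite Ha0 in HEqs *.
  have := right_bot (Jm w) HR HEqs (leqnSn n) (leqnn n).
  have := rpN HEqs; rewrite /= !add0n => -> ->; by [].
- case=> [[-> ->]|[-> ->]]; split=> /=.
  + lia.
  + have HL1 := left_drop HL.
    set q := subp t p (D 1) (L - D 1).
    have Hs : forall x y, y <= L - D 1 ->
        Jw rels (arrs q) x y = Jw rels w (D 1 + x) (D 1 + y).
      by move=> x y Hy; apply: Jw_sub => //; rewrite HLw; lia.
    rewrite (_ : plen p = D 1 + (L - D 1)) in HL1; last by rewrite -/L; lia.
    have HLq := left_unshift Hs HL1.
    have Hpq : plen q = L - D 1 by rewrite /plen /q /= size_takel // size_drop.
    rewrite -Hpq in HLq.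
    have Hvq : valid s t q by apply: valid_subp.
    have [uq [Huq1 Huq2]] := pos_left Hvq HLq.
    by exists uq.
  + by have /andP[] := @right_bounds _ _ _ _ _ HR n (leqnSn n).
  + set q := subp t p 0 (Ep n).
    have HEn : Ep n <= L by have /andP[] := @right_bounds _ _ _ _ _ HR n (leqnSn n).
    have Hs : forall x y, y <= Ep n ->
        Jw rels (arrs q) x y = Jw rels w (0 + x) (0 + y).
      by move=> x y Hy; apply: Jw_sub.
    have HRt := right_trunc HR (leqnSn n).
    rewrite -(add0n (Ep n)) in HRt.
    have HRq := right_unshift Hs HRt.
    have [D' HD'] := RtoL (Jm _) (Js _) HRq.
    have Hpq : plen q = Ep n by rewrite /plen /q /= size_takel // size_drop subn0.
    rewrite -Hpq in HD'.
    have Hvq : valid s t q by apply: valid_subp.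
    have [uq [Huq1 Huq2]] := pos_left Hvq HD'.
    by exists uq.
Qed.
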